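(* Let $G$ be a connected nontrivial graph with $m$ vertices and let $n\geq4$. If $\min\{n^2\lambda(G),\ (n-1)(m+2e(G))\}\geq 2n\delta(G)+2n-4$, then $G\boxtimes K_n$ is maximally restricted edge-connected, i.e. $\lambda'(G\boxtimes K_n)=\xi(G\boxtimes K_n)$.
   Context: All graphs are finite, simple and undirected; ''nontrivial'' means having at least two vertices. $K_n$ denotes the complete graph on $n$ vertices. For a graph $G$: $e(G)=|E(G)|$; $\delta(G)$ is the minimum degree; $\lambda(G)$ is the edge-connectivity; for an edge $uv$, its edge-degree is $d_G(u)+d_G(v)-2$, and $\xi(G)$ is the minimum edge-degree over all edges. A restricted edge-cut of a connected graph $G$ is a set $S\subseteq E(G)$ such that $G-S$ is disconnected and every component of $G-S$ has at least $2$ vertices; $\lambda'(G)$ is the minimum cardinality of a restricted edge-cut. A graph $G$ is maximally restricted edge-connected if $\lambda'(G)=\xi(G)$. The strong product $G\boxtimes H$ has vertex set $V(G)\times V(H)$, with $(x_1,y_1)$ and $(x_2,y_2)$ adjacent iff either $x_1=x_2$ and $y_1y_2\in E(H)$, or $y_1=y_2$ and $x_1x_2\in E(G)$, or $x_1x_2\in E(G)$ and $y_1y_2\in E(H)$. (One has $\xi(G\boxtimes K_n)=2n\delta(G)+2n-4$.) *)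

(* Defs.v *)
From mathcomp Require Import all_boot.
Set Implicit Arguments. Unset Strict Implicit. Unset Printing Implicit Defensive.

(* A finite simple graph on vertex type V is an adjacency relation
   g : rel V, assumed symmetric and irreflexive where needed. Edges are
   the 2-element vertex sets {x,y} with g x y. *)
Section Graphs.
Variable V : finType.
Implicit Types (g : rel V) (S : {set {set V}}).

Definition edges g : {set {set V}} :=
  [set A : {set V} | [exists x, exists y, g x y && (A == [set x; y])]].

Definition nedges g : nat := #|edges g|.

Definition deg g (x : V) : nat := #|[set y | g x y]|.

(* delta(G) (the default #|V| exceeds every degree) *)
Definition mindeg g : nat := \big[minn/#|V|]_(x : V) deg g x.

Definition min_edge_degree g : nat :=
  \big[minn/(2 * #|V|)]_(p : V * V | g p.1 p.2) (deg g p.1 + deg g p.2 - 2).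

Definition gconnected g : Prop := forall x y : V, connect g x y.

Definition edel g S : rel V := fun x y => g x y && ([set x; y] \notin S).

Definition is_edge_cut g S : bool :=
  (S \subset edges g) && ~~ [forall x, forall y, connect (edel g S) x y].

Definition is_restricted_edge_cut g S : bool :=
  is_edge_cut g S && [forall x, 2 <= #|[set y | connect (edel g S) x y]|].

Definition edge_conn g : nat :=
  \big[minn/nedges g]_(S : {set {set V}} | is_edge_cut g S) #|S|.

(* lambda'(G) (only meaningful when a restricted edge-cut exists) *)
Definition restr_edge_conn g : nat :=
  \big[minn/nedges g]_(S : {set {set V}} | is_restricted_edge_cut g S) #|S|.

Definition max_restricted_edge_connected g : Prop :=
  (exists S, is_restricted_edge_cut g S) /\
  restr_edge_conn g = min_edge_degree g.
End Graphs.

Definition strong_prod (T1 T2 : finType) (g : rel T1) (h : rel T2) : rel (T1 * T2) :=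
  fun p q => [|| (p.1 == q.1) && h p.2 q.2,
                 (p.2 == q.2) && g p.1 q.1
               | g p.1 q.1 && h p.2 q.2].

Definition complete_graph (n : nat) : rel 'I_n := fun i j => i != j.
Arguments complete_graph n : clear implicits.

(* Main.v *)
Require Import Defs.
From mathcomp Require Import all_boot zify.
Set Implicit Arguments. Unset Strict Implicit. Unset Printing Implicit Defensive.

Section BigMin.
Variables (I : eqType) (P : pred I) (F : I -> nat) (d : nat).

Lemma bigmin_le_seq (r : seq I) i0 : i0 \in r -> P i0 ->
  \big[minn/d]_(i <- r | P i) F i <= F i0.
Proof.
elim: r => [//|x r IH]; rewrite in_cons big_cons => /orP [/eqP -> -> | Hr HP].
  exact: geq_minl.
case: (P x); last exact: IH.
by rewrite geq_min IH ?orbT.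
Qed.

Lemma bigmin_cases_seq (r : seq I) :
  \big[minn/d]_(i <- r | P i) F i = d \/
  exists2 i, i \in r & P i && (\big[minn/d]_(i <- r | P i) F i == F i).
Proof.
elim: r => [|x r IH]; first by left; rewrite big_nil.
rewrite big_cons; case Px: (P x).
  case: (leqP (F x) (\big[minn/d]_(i <- r | P i) F i)) => h.
    right; exists x; first by rewrite in_cons eqxx.
    by rewrite Px /=; apply/eqP; lia.
  case: IH => [E|[i ir /andP[Pi /eqP E]]].
    by left; lia.
  right; exists i; first by rewrite in_cons ir orbT.
  by rewrite Pi /=; apply/eqP; lia.
case: IH => [E|[i ir /andP[Pi /eqP E]]]; first by left.
by right; exists i; rewrite ?in_cons ?ir ?orbT // Pi E eqxx.
Qed.

Lemma bigmin_ge_seq (r : seq I) L : L <= d -> (forall i, P i -> L <= F i) ->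
  L <= \big[minn/d]_(i <- r | P i) F i.
Proof.
move=> Ld HF; elim/big_ind: _ => //.
  by move=> x y; rewrite leq_min => -> ->.
Qed.
End BigMin.

Section Cuts.
Variables (W : finType) (r : rel W).

Definition cutpairs (Z : {set W}) : {set W * W} :=
  [set p | (p.1 \in Z) && (p.2 \notin Z) && r p.1 p.2].
Definition cutset (Z : {set W}) : {set {set W}} :=
  [set [set p.1; p.2] | p in cutpairs Z].
Definition cutf (Z : {set W}) : nat :=
  \sum_u \sum_v ((u \in Z) && (v \notin Z) && r u v).

Lemma card_cutpairs Z : #|cutpairs Z| = cutf Z.
Proof.
rewrite /cutf pair_bigA /= -sum1_card big_mkcond /=.
by apply: eq_bigr => p _; rewrite inE; case: ifP.
Qed.

Lemma card_cutset Z : #|cutset Z| = cutf Z.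
Proof.
rewrite -card_cutpairs card_in_imset // => [[a b]] [c d]; rewrite !inE /=.
move=> /andP[/andP[aZ bZ] _] /andP[/andP[cZ dZ] _] E.
have : a \in [set c; d] by rewrite -E !inE eqxx.
rewrite !inE => /orP[/eqP ac|/eqP ad]; last by move: dZ; rewrite -ad aZ.
have : b \in [set c; d] by rewrite -E !inE eqxx orbT.
rewrite !inE => /orP[/eqP bc|/eqP bd]; last by rewrite ac bd.
by move: bZ; rewrite bc cZ.
Qed.

Lemma cutset_edges Z : cutset Z \subset edges r.
Proof.
apply/subsetP => A /imsetP [[a b]]; rewrite inE /= => /andP[_ rab] ->.
by rewrite inE; apply/existsP; exists a; apply/existsP; exists b; rewrite rab eqxx.
Qed.

Lemma closed_cut Z (S : {set {set W}}) u w : cutset Z \subset S -> u \in Z ->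
  connect (edel r S) u w -> w \in Z.
Proof.
move=> sub uZ /connectP [p pth ->]; elim: p u uZ pth => [//|x p IH] u uZ /=.
move=> /andP[/andP[rux nS] pth]; apply: IH pth; apply/negPn/negP => xZ.
move: nS; rewrite (subsetP sub) //; apply/imsetP; exists (u, x) => //.
by rewrite inE /= uZ xZ rux.
Qed.

Lemma cutset_is_cut (Z : {set W}) u w : u \in Z -> w \notin Z -> is_edge_cut r (cutset Z).
Proof.
move=> uZ wZ; rewrite /is_edge_cut cutset_edges /=; apply/forallPn; exists u.
apply/forallPn; exists w; apply/negP => /(closed_cut (subxx _) uZ).
by rewrite (negbTE wZ).
Qed.
End Cuts.
Lemma card_set_sum (W : finType) (P : pred W) : #|[set y | P y]| = \sum_y (P y : nat).
Proof.
rewrite -sum1_card big_mkcond; apply: eq_bigr => y _; rewrite inE; by case: (P y).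
Qed.

Lemma sum_pair (A B : finType) (F : A * B -> nat) :
  \sum_u F u = \sum_x \sum_j F (x, j).
Proof. by rewrite pair_bigA; apply: eq_bigr => [[]]. Qed.

Lemma count_t a b m : \sum_(t < m) ((b <= t) && (t < a) : nat) = minn a m - b.
Proof.
elim: m => [|m IH]; first by rewrite big_ord0; lia.
rewrite big_ord_recr /= IH.
case: (leqP b m) => hb; case: (ltnP m a) => ha /=; lia.
Qed.

Section Prod.
Variables (T : finType) (g : rel T) (n : nat).
Hypotheses (gsym : symmetric g) (girr : irreflexive g).
Local Notation H := (strong_prod g (complete_graph n)).
Implicit Types X : {set T * 'I_n}.

Lemma H_sym : symmetric H.
Proof.
move=> [x i] [y j]; rewrite /strong_prod /complete_graph /=.
have gs : g y x = g x y by apply: gsym.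
rewrite gs.
by rewrite (eq_sym x y) (eq_sym i j).
Qed.

Lemma H_irr : irreflexive H.
Proof. move=> [x i]; rewrite /strong_prod /complete_graph /=. have gi : g x x = false := girr x. by rewrite gi (eqxx x) (eqxx i). Qed.

Lemma sum_neq (i : 'I_n) : \sum_j ((i != j) : nat) = n.-1.
Proof.
rewrite -card_set_sum.
have -> : [set j | i != j] = [set~ i] by apply/setP => j; rewrite !inE eq_sym.
by rewrite cardsC1 card_ord.
Qed.

Lemma degH_sum x i : \sum_u (H (x, i) u : nat) = n.-1 + n * deg g x.
Proof.
rewrite -(pair_bigA _ (fun y j => (H (x, i) (y, j) : nat))) /=.
rewrite (eq_bigr (fun y => (y == x) * n.-1 + g x y * n)); last first.
  move=> y _; rewrite /strong_prod /complete_graph /=.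
  case: (eqVneq y x) => [->|nyx].
    have gi : g x x = false := girr x.
    rewrite gi mul1n mul0n addn0 -(sum_neq i).
    by apply: eq_bigr => j _; case: (i != j); rewrite ?andbF.
  rewrite mul0n add0n.
  rewrite (eq_bigr (fun _ => (g x y : nat))); last by move=> j _; case: (g x y); case: (i == j); rewrite ?andbF.
  by rewrite sum_nat_const card_ord mulnC.
rewrite big_split /= -!big_distrl /= /deg card_set_sum mulnC.
rewrite (bigD1 x) //= (eqxx x) big1 ?addn0 ?muln1 1?mulnC //.
by move=> y /negbTE ->.
Qed.

Definition nbX (X : {set T * 'I_n}) v := \sum_u ((u \in X) && H v u : nat).

Lemma cutf_nb X : cutf H X = \sum_v (v \notin X) * nbX X v.
Proof.
rewrite /cutf exchange_big /=; apply: eq_bigr => v _.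
case: (v \in X) => /=; first by rewrite mul0n big1 // => u _; rewrite andbF.
rewrite mul1n; apply: eq_bigr => u _; by rewrite andbT H_sym.
Qed.

Lemma cutf_sym X : cutf H (~: X) = cutf H X.
Proof.
rewrite /cutf exchange_big /=; apply: eq_bigr => u _; apply: eq_bigr => v _.
by rewrite !inE negbK H_sym; case: (u \in X); case: (v \in X); rewrite ?andbF.
Qed.

Lemma mindeg_le x : mindeg g <= deg g x.
Proof. exact: bigmin_le_seq (mem_index_enum _) _. Qed.

Lemma nb_case1 X v : v \notin X -> \sum_u (H v u : nat) <= nbX X v + (#|~: X| - 1).
Proof.
move=> vX.
have -> : \sum_u (H v u : nat) = nbX X v + \sum_u ((u \notin X) && H v u : nat).
  rewrite /nbX -big_split /=; apply: eq_bigr => u _.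
  by case: (u \in X); case: (H v u).
rewrite leq_add2l.
have : \sum_u ((u \notin X) && H v u : nat) + 1 <= #|~: X|.
  have -> : #|~: X| = \sum_u (u \notin X : nat).
    by rewrite -card_set_sum; congr #|_|; apply/setP => u; rewrite !inE.
  rewrite (bigD1 v) //= [X in _ <= X](bigD1 v) //= H_irr andbF vX add0n addnC leq_add2l.
  apply: leq_sum => u _; by case: (u \in X); case: (H v u).
lia.
Qed.

Lemma nb_case2 X v : (forall x, exists i, (x, i) \in X) -> v \notin X ->
  (deg g v.1).+1 <= nbX X v.
Proof.
case: v => y i /= hX vX.
rewrite /nbX sum_pair.
apply: (@leq_trans (\sum_x ((x == y) + g y x))).
  have e1 : \sum_x ((x == y) : nat) = 1.
    by rewrite (bigD1 y) //= eqxx big1 // => x /negbTE ->.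
  by rewrite big_split /= e1 /deg card_set_sum.
apply: leq_sum => x _; case: (hX x) => j xjX.
apply: (@leq_trans (((x, j) \in X) && H (y, i) (x, j))); last first.
  by rewrite (bigD1 j) //= leq_addr.
rewrite xjX /= /strong_prod /complete_graph /=.
case: (eqVneq x y) => [exy|nxy].
  subst x; have gi : g y y = false := girr y; rewrite gi.
  have nij : i != j by apply/eqP => eij; move: vX; rewrite eij xjX.
  by rewrite nij.
by case: (g y x) => //=; case: (i == j).
Qed.

Definition ax X x := \sum_i (((x, i) \in X) : nat).

Lemma ax_le X x : ax X x <= n.
Proof.
apply: (@leq_trans (\sum_(i < n) 1)); last by rewrite sum_nat_const card_ord muln1.
by apply: leq_sum => i _; case: (_ \in _).
Qed.

Lemma bx X y : \sum_j (((y, j) \notin X) : nat) = n - ax X y.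
Proof.
have : \sum_j (((y, j) \notin X) : nat) + ax X y = n.
  rewrite /ax -big_split /= -[RHS]muln1 -[n in n * 1]card_ord -sum_nat_const.
  by apply: eq_bigr => j _; case: (_ \in _).
lia.
Qed.

Lemma cutf_ge3 X : \sum_x \sum_y g x y * (ax X x * (n - ax X y)) <= cutf H X.
Proof.
rewrite /cutf sum_pair.
have -> : \sum_x \sum_y g x y * (ax X x * (n - ax X y)) =
   \sum_x \sum_i \sum_y \sum_j (g x y * (((x, i) \in X) * ((y, j) \notin X))).
  apply: eq_bigr => x _; rewrite exchange_big /=; apply: eq_bigr => y _.
  rewrite -bx /ax big_distrl /= big_distrr /=; apply: eq_bigr => i _.
  by rewrite big_distrr /= big_distrr /=.
apply: leq_sum => x _; apply: leq_sum => i _; rewrite sum_pair.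
apply: leq_sum => y _; apply: leq_sum => j _.
rewrite /strong_prod /complete_graph /=.
by case: (g x y); case: (_ \in X); case: (_ \in X); case: (x == y); case: (i == j).
Qed.


Lemma level X t x1 x0 : (forall i, (x1, i) \in X) -> (forall i, (x0, i) \notin X) ->
  t < n -> edge_conn g <= \sum_x \sum_y (g x y && (ax X y <= t) && (t < ax X x) : nat).
Proof.
move=> h1 h0 tn; set Lt := [set x | t < ax X x].
have ax1 : ax X x1 = n.
  rewrite /ax (eq_bigr (fun _ => 1)) ?sum_nat_const ?card_ord ?muln1 // => i _.
  by rewrite h1.
have ax0 : ax X x0 = 0 by rewrite /ax big1 // => i _; rewrite (negbTE (h0 i)).
have cut : is_edge_cut g (cutset g Lt).
  by apply: (@cutset_is_cut _ _ _ x1 x0); rewrite inE ?ax1 ?ax0 // -leqNgt.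
apply: (@leq_trans #|cutset g Lt|).
  exact: bigmin_le_seq (mem_index_enum _) cut.
rewrite card_cutset /cutf leq_eqVlt; apply/orP; left; apply/eqP.
apply: eq_bigr => x _; apply: eq_bigr => y _.
by rewrite !inE -leqNgt; case: (g x y); case: (t < ax X x); case: (ax X y <= t).
Qed.

Lemma case3 X x1 x0 : (forall i, (x1, i) \in X) -> (forall i, (x0, i) \notin X) ->
  n ^ 2 * edge_conn g <= cutf H X.
Proof.
move=> h1 h0; apply: leq_trans (cutf_ge3 X).
apply: (@leq_trans (n * \sum_x \sum_y g x y * (ax X x - ax X y))); last first.
  rewrite big_distrr /=; apply: leq_sum => x _; rewrite big_distrr /=.
  apply: leq_sum => y _; have := ax_le X x; have := ax_le X y.
  case: (g x y); rewrite ?mul0n ?muln0 // !mul1n; nia.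
rewrite expnS -mulnA leq_mul2l; apply/orP; right.
have -> : \sum_x \sum_y g x y * (ax X x - ax X y) =
   \sum_(t < n) \sum_x \sum_y (g x y && (ax X y <= t) && (t < ax X x) : nat).
  rewrite [RHS]exchange_big /=; apply: eq_bigr => x _.
  rewrite [RHS]exchange_big /=; apply: eq_bigr => y _.
  have := count_t (ax X x) (ax X y) n; rewrite (minn_idPl (ax_le X x)) => <-.
  rewrite big_distrr /=; apply: eq_bigr => t _.
  by case: (g x y); rewrite ?mul1n ?mul0n.
rewrite -[n in n * _]card_ord -sum_nat_const; apply: leq_sum => t _.
exact: (level h1 h0 (ltn_ord t)).
Qed.

Lemma cutf_ge_const X c : (forall v, v \notin X -> c <= nbX X v) -> #|~: X| * c <= cutf H X.
Proof.
move=> hc; rewrite cutf_nb.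
have -> : #|~: X| = \sum_v (v \notin X : nat).
  by rewrite -card_set_sum; congr #|_|; apply/setP => u; rewrite !inE.
rewrite big_distrl /=; apply: leq_sum => v _.
by case vX: (v \in X) => //=; rewrite !mul1n hc ?vX.
Qed.

Lemma side2 X : (forall x, exists i, (x, i) \in X) -> 2 <= #|~: X| ->
  1 <= mindeg g -> 4 <= n -> 2 * n * mindeg g + 2 * n - 4 <= cutf H X.
Proof.
move=> hX k2 d1 n4; set k := #|~: X|; set d := mindeg g.
case: (leqP k (n * d + n - 2)) => hk.
  have : k * (n * d + n - 1 - (k - 1)) <= cutf H X.
    apply: cutf_ge_const => v vX.
    case: v vX => x i vX; have := nb_case1 vX; rewrite degH_sum.
    have := mindeg_le x; rewrite -/k -/d; nia.
  move=> h; apply: leq_trans h; nia.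
have : k * d.+1 <= cutf H X.
  apply: cutf_ge_const => v vX.
  by apply: leq_trans (nb_case2 hX vX); rewrite ltnS mindeg_le.
move=> h; apply: leq_trans h; nia.
Qed.

Lemma cutLB_X X : 2 <= #|X| -> 2 <= #|~: X| -> 1 <= mindeg g -> 4 <= n ->
  2 * n * mindeg g + 2 * n - 4 <= n ^ 2 * edge_conn g ->
  2 * n * mindeg g + 2 * n - 4 <= cutf H X.
Proof.
move=> kX kY d1 n4 hl.
case: (boolP [forall x, [exists i, (x, i) \in X]]) => [/forallP h|].
  by apply: side2 => // x; case/existsP: (h x) => i hi; exists i.
move=> /forallPn [x0 /existsPn h0].
case: (boolP [forall x, [exists i, (x, i) \in ~: X]]) => [/forallP h|].
  rewrite -cutf_sym; apply: side2 => //; last by rewrite setCK.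
  by move=> x; case/existsP: (h x) => i hi; exists i.
move=> /forallPn [x1 /existsPn h1].
apply: leq_trans hl _; apply: (@case3 X x1 x0) => i.
  by have := h1 i; rewrite inE negbK.
exact: h0.
Qed.

Lemma edel_sym (S : {set {set T * 'I_n}}) : symmetric (edel H S).
Proof. by move=> a b; rewrite /edel H_sym setUC. Qed.

Lemma cutLB (S : {set {set T * 'I_n}}) : 1 <= mindeg g -> 4 <= n ->
  2 * n * mindeg g + 2 * n - 4 <= n ^ 2 * edge_conn g ->
  is_restricted_edge_cut H S -> 2 * n * mindeg g + 2 * n - 4 <= #|S|.
Proof.
move=> d1 n4 hl /andP[/andP[sub /forallPn [x0 /forallPn [y0 nc]]] /forallP comp2].
set X := [set y | connect (edel H S) x0 y].
have csym := sym_connect_sym (@edel_sym S).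
have sXS : cutset H X \subset S.
  apply/subsetP => A /imsetP [[a b]]; rewrite inE /= => /andP[/andP[aX bX] hab] ->.
  apply/negPn/negP => nS; move: bX; rewrite inE; apply/negP/negPn.
  move: aX; rewrite inE => aX; apply: connect_trans aX (connect1 _).
  by rewrite /edel hab nS.
apply: (@leq_trans #|cutset H X|); last exact: subset_leq_card.
rewrite card_cutset; apply: cutLB_X => //; first exact: comp2.
apply: leq_trans (comp2 y0) (subset_leq_card _).
apply/subsetP => z; rewrite !inE => yz; apply/negP => xz.
by move: nc; rewrite (connect_trans xz) // csym.
Qed.

Lemma has_nb x : gconnected g -> 1 < #|T| -> exists y, g x y.
Proof.
move=> gc /card_gt1P [a [b [_ _ ab]]].
have [z xz] : exists z, x != z.
  by case: (eqVneq x a) => [xa|]; [exists b; rewrite xa | exists a].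
case/connectP: (gc x z) => [[|y p]] /=; first by move=> _ zx; move: xz; rewrite zx eqxx.
by move=> /andP[gxy _] _; exists y.
Qed.

Lemma deg_lt x : deg g x < #|T|.
Proof.
have : [set y | g x y] \subset [set~ x].
  apply/subsetP => y; rewrite !inE => gxy; apply/eqP => yx; move: gxy.
  by rewrite yx; have -> : g x x = false := girr x.
move/subset_leq_card; rewrite cardsC1 /deg => h.
have t0 : 0 < #|T| by apply/card_gt0P; exists x.
lia.
Qed.

Lemma mindeg_attained : 0 < #|T| -> exists x, deg g x = mindeg g.
Proof.
move=> /card_gt0P [x0 _].
case: (bigmin_cases_seq predT (deg g) #|T| (index_enum T)) => [E|[x _ /eqP E]].
  by have := mindeg_le x0; rewrite /mindeg E => h; have := deg_lt x0; lia.
by exists x; rewrite /mindeg E.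
Qed.

Lemma mindeg_ge1 : gconnected g -> 1 < #|T| -> 1 <= mindeg g.
Proof.
move=> gc t1; apply: bigmin_ge_seq; first lia.
move=> x _; case: (has_nb x gc t1) => y gxy; apply/card_gt0P; exists y.
by rewrite inE.
Qed.

Lemma notin_cutset (r : rel (T * 'I_n)) (Z : {set T * 'I_n}) w w' :
  (w \in Z) = (w' \in Z) -> [set w; w'] \notin cutset r Z.
Proof.
move=> E; apply/negP => /imsetP [[a b]]; rewrite inE /= => /andP[/andP[aZ bZ] _] E2.
have : a \in [set w; w'] by rewrite E2 !inE eqxx.
have : b \in [set w; w'] by rewrite E2 !inE eqxx orbT.
rewrite !inE => /orP[/eqP eb|/eqP eb] /orP[/eqP ea|/eqP ea];
  move: aZ bZ E; rewrite ea eb; by case: (w \in Z); case: (w' \in Z).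
Qed.

Lemma cutf_Z (Z : {set T * 'I_n}) x0 :
  (forall w, w \in Z -> w.1 = x0 /\ exists2 w', w' \in Z & H w w') ->
  cutf H Z <= #|Z| * (n.-1 + n * deg g x0 - 1).
Proof.
move=> hZ.
have -> : cutf H Z = cutf H (~: Z) by rewrite -{1}(setCK Z) cutf_sym.
have -> : #|Z| = \sum_w (w \in Z : nat).
  by rewrite -card_set_sum; apply: eq_card => u; rewrite !inE.
rewrite cutf_nb big_distrl /=; apply: leq_sum => w _.
rewrite inE negbK; case wZ: (w \in Z) => //; rewrite !mul1n.
case: (hZ w wZ) => w1 [w' w'Z hww'].
have := degH_sum x0 w.2; rewrite -w1 -surjective_pairing => <-.
have : nbX (~: Z) w + 1 <= \sum_u (H w u : nat).
  rewrite /nbX (bigD1 w') //= [X in _ <= X](bigD1 w') //= inE w'Z hww' /= add0n addnC leq_add2l.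
  by apply: leq_sum => u _; case: (_ \in _).
lia.
Qed.
End Prod.

Unset Implicit Arguments.

Theorem corollary3p8 (T : finType) (g : rel T) (n : nat) :
  symmetric g -> irreflexive g -> gconnected g -> 1 < #|T| -> 4 <= n ->
  2 * n * mindeg g + 2 * n - 4 <=
    minn (n ^ 2 * edge_conn g) ((n - 1) * (#|T| + 2 * nedges g)) ->
  max_restricted_edge_connected (strong_prod g (complete_graph n)).
Proof.
move=> gsym girr gc t1 n4 hmin.
have hl := leq_trans hmin (geq_minl _ _).
have d1 := mindeg_ge1 gc t1.
have [x0 dx0] := mindeg_attained girr (ltnW t1).
have n0 : 0 < n by lia.
have n1 : 1 < n by lia.
have n2 : 2 < n by lia.
pose i0 := Ordinal n0; pose i1 := Ordinal n1; pose i2 := Ordinal n2.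
pose u := (x0, i0); pose v := (x0, i1).
pose Z := [set u; v].
set H := strong_prod g (complete_graph n).
have degHx : forall w : T * 'I_n, deg H w = n.-1 + n * deg g w.1.
  by case=> x i; rewrite /deg card_set_sum (degH_sum girr).
have Huv : H u v by rewrite /H /strong_prod /complete_graph /= eqxx.
have Hvu : H v u by rewrite /H /strong_prod /complete_graph /= eqxx.
have uv : u != v by apply/eqP => /(f_equal (fun p : T * 'I_n => val p.2)).
pose S0 := cutset H Z.
have S0cut : is_restricted_edge_cut H S0.
  rewrite /is_restricted_edge_cut (@cutset_is_cut _ _ _ u (x0, i2)) /=; last first.
  - by rewrite !inE /u /v !xpair_eqE eqxx.
  - by rewrite !inE eqxx.
  apply/forallP => w.
  have [w' [ww' Hww' eqZ]] : exists w', [/\ w != w', H w w' & (w \in Z) = (w' \in Z)].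
    case: (boolP (w \in Z)) => wZ.
      move: (wZ); rewrite !inE => /orP[/eqP->|/eqP->].
        by exists v; rewrite Huv !inE !eqxx orbT.
      by exists u; rewrite eq_sym Hvu !inE !eqxx.
    case: w wZ => y j wZ.
    case: (eqVneq y x0) => [yx|nyx].
      subst y; case: (has_nb x0 gc t1) => z gz.
      have gxx : g x0 x0 = false := girr x0.
      have zx : z != x0 by apply/eqP => zx; move: gz; rewrite zx gxx.
      exists (z, j); split.
      - by apply: contra zx => /eqP [->]; rewrite eqxx.
      - by rewrite /H /strong_prod /= gz andbT; apply/orP; right; apply/orP; left; apply/eqP.
      - by rewrite !inE /u /v !xpair_eqE (negbTE zx).
    pose j' := if j == i0 then i1 else i0.
    have jj : j != j' by rewrite /j'; case: (eqVneq j i0) => [->|].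
    exists (y, j'); split.
    - by rewrite xpair_eqE negb_and jj orbT.
    - by rewrite /H /strong_prod /complete_graph /= jj andbT; apply/orP; left; apply/eqP.
    - by rewrite !inE /u /v !xpair_eqE (negbTE nyx).
  apply: (@leq_trans #|[set w; w']|); first by rewrite cards2 ww'.
  apply/subset_leq_card/subsetP => z; rewrite !inE => /orP[/eqP->|/eqP->].
    exact: connect0.
  by apply: connect1; rewrite /edel Hww' notin_cutset.
have S0le : #|S0| <= 2 * n * mindeg g + 2 * n - 4.
  rewrite card_cutset; apply: leq_trans (cutf_Z gsym girr (Z:=Z) (x0:=x0) _) _.
    move=> w; rewrite !inE => /orP[/eqP->|/eqP->]; split => //.
      by exists v; rewrite ?Huv // !inE eqxx orbT.
    by exists u; rewrite ?Hvu // !inE eqxx.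
  rewrite cards2 uv dx0; lia.
have S0ge := cutLB gsym girr d1 n4 hl S0cut.
split; first by exists S0.
have xiH : min_edge_degree H = 2 * n * mindeg g + 2 * n - 4.
  apply/eqP; rewrite eqn_leq; apply/andP; split.
    apply: leq_trans (@bigmin_le_seq _ (fun p => H p.1 p.2) _ _ _ (u, v) (mem_index_enum _) Huv) _.
    rewrite /= !degHx /= dx0; lia.
  apply: bigmin_ge_seq.
    rewrite card_prod card_ord; have := deg_lt girr x0; rewrite dx0; nia.
  move=> [p1 p2] /= _; rewrite !degHx.
  have := mindeg_le g p1.1; have := mindeg_le g p2.1.
  move=> h2 h1; have := leq_mul (leqnn n) h1; have := leq_mul (leqnn n) h2; rewrite -mulnA; move: (n * mindeg g) (n * deg g p1.1) (n * deg g p2.1) => a b c; lia.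
rewrite xiH; apply/eqP; rewrite eqn_leq; apply/andP; split.
  exact: leq_trans (bigmin_le_seq _ _ (mem_index_enum _) S0cut) S0le.
apply: bigmin_ge_seq.
  exact: leq_trans S0ge (subset_leq_card (cutset_edges _ _)).
move=> S hS; apply: (cutLB gsym girr d1 n4 hl); exact: hS.
Qed.
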